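(* Let $\mathcal J$ be an arbitrary index set and, for each $j\in\mathcal J$, let $\rho_{j,k,l},\eta_{j,k,l}\in K[X]$ be polynomials indexed by finitely many $k$ and, for each $k$, finitely many $l$. If the $L_\theta$-theory $$T_\theta\cup\Big\{\sum_k\bigcap_l\mathrm{Ker}(\rho_{j,k,l})=\sum_k\bigcap_l\mathrm{Ker}(\eta_{j,k,l}):j\in\mathcal J\Big\}$$ is consistent, then it is equivalent to a theory of one of the following forms: (1) $T_\theta\cup\{\mathrm{Ker}(\rho)=\mathbb V\}$, where $\rho\in K[X]$ is monic with $\rho\neq1$; (2) $T_\theta\cup\{\mathrm{Ker}(f^{n_f})=\mathrm{Ker}(f^{n_f+1}):f\in Q\}$, where $Q$ is a (possibly infinite) set of monic irreducible polynomials in $K[X]$ and $n_f\in\mathbb N$ for each $f\in Q$.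
   Context: Setting: $L$ is a first-order language, $T$ a model-complete $L$-theory and $K$ a field. There are $L$-formulas without parameters which define, in every model $\mathcal M\models T$, a nontrivial $K$-vector space $\mathbb V=\mathbb V^{\mathcal M}$ (the paper also assumes $\mathbb V$ infinite in every model); elements of $\mathbb V$ are treated as single elements. $L_\theta=L\cup\{\theta\}$, $\theta$ a new unary function symbol; $T_\theta$ is $T$ plus axioms saying $\theta|_{\mathbb V}$ is a $K$-linear endomorphism of $\mathbb V$ and $\theta(x)=0$ for $x\notin\mathbb V$. For $\rho=\sum_i(\rho)_iX^i\in K[X]$, $\rho[\theta]:=\sum_i(\rho)_i\theta^i$ and $\mathrm{Ker}(\rho)$ denotes the definable subspace $\{v\in\mathbb V:\rho[\theta](v)=0\}$. An equation between sums of intersections of such kernels is the first-order sentence asserting equality of the corresponding definable subsets of $\mathbb V$. Two theories are equivalent if they have the same models. *)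

(* Defs.v *)
From HB Require Import structures.
From mathcomp Require Import all_boot all_order all_algebra.
Set Implicit Arguments. Unset Strict Implicit. Unset Printing Implicit Defensive.
Import Order.TTheory GRing.Theory Num.Theory.
Local Open Scope ring_scope.

(* A model of T_theta is a pair (i, th)
   where i ranges over (an index type for) the models M of T, [V i] is the
   K-vector space V^M defined in M, and th : V i -> V i is a K-linear
   endomorphism (the interpretation of theta on V; theta is 0 outside V, so
   it carries no further information). *)

Section PolyEnd.
Variables (K : fieldType) (V : lmodType K).

Definition polyend (rho : {poly K}) (th : V -> V) (v : V) : V :=
  \sum_(i < size rho) rho`_i *: iter i th v.

Definition Ker (th : V -> V) (rho : {poly K}) : V -> Prop :=
  fun v => polyend rho th v = 0.

Definition sumcap (th : V -> V) (n : nat) (m : 'I_n -> nat)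
  (P : forall k : 'I_n, 'I_(m k) -> {poly K}) : V -> Prop :=
  fun v => exists w : 'I_n -> V,
    (forall (k : 'I_n) (l : 'I_(m k)), Ker th (P k l) (w k)) /\
    v = \sum_(k < n) w k.

Definition kereq (th : V -> V) (n : nat) (m : 'I_n -> nat)
  (rho eta : forall k : 'I_n, 'I_(m k) -> {poly K}) : Prop :=
  forall v, sumcap th rho v <-> sumcap th eta v.

End PolyEnd.

(* Main.v *)
Require Import Defs.
From HB Require Import structures.
From mathcomp Require Import all_boot all_order all_algebra.
From Stdlib Require Import Classical ClassicalEpsilon.
Import GRing.Theory.
Local Open Scope ring_scope.

Lemma cmin (P : nat -> Prop) : (exists n, P n) -> exists n, P n /\ forall m, P m -> (n <= m)%N.
Proof.
move=> [n Pn]; elim: n {-2}n (leqnn n) Pn => [|N IH] n Hn Pn.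
  by exists n; split => // m _; move: Hn; rewrite leqn0 => /eqP ->.
case: (classic (exists m, P m /\ (m < n)%N)) => [[m [Pm Hm]]|H].
  by apply: (IH m) => //; rewrite -ltnS (leq_trans Hm Hn).
exists n; split => // m Pm; rewrite leqNgt; apply/negP => Hm; apply: H; by exists m.
Qed.

Section PolyAlg.
Variable K : fieldType.
Implicit Types (p q g c : {poly K}).

Lemma irr_coprime p q : irreducible_poly p -> ~~ (p %| q) -> coprimep p q.
Proof.
move=> irr nd; rewrite /coprimep; case: (eqVneq (size (gcdp p q)) 1%N) => // H.
have E := irr _ H (dvdp_gcdl p q).
by move: nd; rewrite -(eqp_dvdl _ E) dvdp_gcdr.
Qed.

Lemma strong_size (P : {poly K} -> Prop) :
  (forall c : {poly K}, (forall d : {poly K}, (size d < size c)%N -> P d) -> P c) -> forall c, P c.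
Proof.
move=> H c; elim: (size c) {-2}c (leqnn (size c)) => [|N IH] c' Hc; apply: H => d Hd.
  by move: Hc Hd; rewrite leqn0 => /eqP ->.
by apply: IH; rewrite -ltnS (leq_trans Hd Hc).
Qed.

Lemma irr_factor c : (1 < size c)%N -> exists p, irreducible_poly p /\ p %| c.
Proof.
elim/strong_size: c => c IH Hc.
case: (classic (irreducible_poly c)) => [irr|nirr]; first by exists c; split => //; exact: dvdpp.
have : ~ (forall q, size q != 1%N -> q %| c -> q %= c).
  by move=> H; apply: nirr; split.
move=> /not_all_ex_not [q Hq']; have [Hq Hq''] := imply_to_and _ _ Hq'.
have [Hqc Hne] := imply_to_and _ _ Hq''.
have c0 : c != 0 by rewrite -size_poly_gt0 (ltn_trans _ Hc).
have q0 : q != 0 by apply: contraNneq c0 => q0; move: Hqc; rewrite q0 dvd0p.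
have Hsq : (size q < size c)%N.
  rewrite ltn_neqAle dvdp_leq // andbT; apply/negP => /eqP E.
  by apply: Hne; rewrite -dvdp_size_eqp // E.
have Hq1 : (1 < size q)%N.
  by rewrite ltn_neqAle eq_sym Hq /= size_poly_gt0.
have [p [irr Hp]] := IH q Hsq Hq1.
by exists p; split => //; exact: dvdp_trans Hp Hqc.
Qed.

Lemma decomp g p : g != 0 -> irreducible_poly p ->
  exists e g1, g = p ^+ e * g1 /\ ~~ (p %| g1).
Proof.
move=> + irr; elim/strong_size: g => g IH g0.
case: (boolP (p %| g)) => Hpg; last by exists 0%N, g; rewrite expr0 mul1r.
have p0 := irredp_neq0 irr.
have E := divpK Hpg.
have g'0 : g %/ p != 0 by apply: contraNneq g0 => H; rewrite -E H mul0r.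
have Hs : (size (g %/ p)%R < size g)%N.
  rewrite size_divp // ltn_subrL size_poly_gt0 g0 andbT ltn_predRL.
  by case: irr.
have [e [g1 [Eg Hg1]]] := IH _ Hs g'0.
exists e.+1, g1; split => //; by rewrite -E Eg exprSr mulrAC.
Qed.

End PolyAlg.
Arguments irr_factor {K c}.
Arguments decomp {K g p}.
Arguments irr_coprime {K p q}.
Section PE.
Variables (K : fieldType) (V : lmodType K) (th : {linear V -> V}).
Implicit Types (p q : {poly K}) (v u w : V).

Local Notation pe p v := (polyend p (fun x => th x) v).

Lemma iter_lin i : forall u w (a : K), iter i (fun x => th x) (a *: u + w) =
  a *: iter i (fun x => th x) u + iter i (fun x => th x) w.
Proof. elim: i => [|i IH] u w a //=. by rewrite IH linearD linearZ. Qed.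

Lemma iter0 i : iter i (fun x => th x) 0 = 0.
Proof. by elim: i => //= i ->; rewrite linear0. Qed.

Lemma pe_ext p n v : (size p <= n)%N ->
  pe p v = \sum_(i < n) p`_i *: iter i (fun x => th x) v.
Proof.
move=> H; rewrite /polyend (big_ord_widen n (fun i => p`_i *: iter i (fun x => th x) v) H).
rewrite big_mkcond; apply: eq_bigr => i _; case: ifP => // /negbT.
by rewrite -leqNgt => Hi; rewrite nth_default // scale0r.
Qed.

Lemma pe0 v : pe 0 v = 0.
Proof. by rewrite /polyend size_poly0 big_ord0. Qed.

Lemma pe_add p q v : pe (p + q) v = pe p v + pe q v.
Proof.
have Hm := size_polyD p q.
rewrite !(@pe_ext _ (maxn (size p) (size q))) ?leq_maxl ?leq_maxr //.
rewrite -big_split; apply: eq_bigr => i _; by rewrite coefD scalerDl.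
Qed.

Lemma pe_scale c p v : pe (c *: p) v = c *: pe p v.
Proof.
rewrite !(@pe_ext _ (size p)) ?size_scale_leq //.
rewrite scaler_sumr; apply: eq_bigr => i _; by rewrite coefZ scalerA.
Qed.

Lemma pe_C c v : pe c%:P v = c *: v.
Proof. by rewrite (@pe_ext _ 1) ?size_polyC_leq1 // big_ord1 coefC. Qed.

Lemma pe_lin p a u w : pe p (a *: u + w) = a *: pe p u + pe p w.
Proof.
rewrite /polyend scaler_sumr -big_split; apply: eq_bigr => i _.
by rewrite iter_lin scalerDr !scalerA [_ * a]mulrC.
Qed.

Lemma pe_v0 p : pe p 0 = 0.
Proof. by rewrite /polyend big1 // => i _; rewrite iter0 scaler0. Qed.

Lemma pe_vadd p u w : pe p (u + w) = pe p u + pe p w.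
Proof. by have := pe_lin p 1 u w; rewrite !scale1r. Qed.

Lemma pe_vscale p a u : pe p (a *: u) = a *: pe p u.
Proof. by have := pe_lin p a u 0; rewrite pe_v0 !addr0. Qed.

Lemma th_pe p v : th (pe p v) = pe p (th v).
Proof.
rewrite /polyend linear_sum; apply: eq_bigr => i _.
by rewrite linearZ /= -iterS iterSr.
Qed.

Lemma pe_mulX p v : pe (p * 'X) v = pe p (th v).
Proof.
rewrite (@pe_ext _ (size p).+1); last first.
  have [->|nz] := eqVneq p 0; first by rewrite mul0r size_poly0.
  by rewrite size_mulX.
rewrite big_ord_recl coefMX /= scale0r add0r /polyend.
apply: eq_bigr => i _; rewrite coefMX /bump /= add0n; congr (_ *: _). exact: (iterSr i (fun x => th x) v).
Qed.

Lemma pe_mul p q v : pe (p * q) v = pe p (pe q v).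
Proof.
elim/poly_ind: p v => [|p c IH] v; first by rewrite mul0r !pe0.
rewrite mulrDl mulrAC !pe_add !pe_mulX IH mul_polyC pe_scale pe_C th_pe.
by [].
Qed.

Lemma pe_comm p q v : pe p (pe q v) = pe q (pe p v).
Proof. by rewrite -!pe_mul mulrC. Qed.

Lemma pe_1 v : pe 1 v = v.
Proof. by rewrite pe_C scale1r. Qed.

Lemma pe_dvd p q v : p %| q -> pe p v = 0 -> pe q v = 0.
Proof. by move=> /divpK <- H; rewrite pe_mul H pe_v0. Qed.

End PE.

Arguments pe_dvd {K V th p q v}.

Section Model.
Variables (K : fieldType) (V : lmodType K) (th : {linear V -> V}).
Implicit Types (p q g c a b : {poly K}) (v u w : V).
Local Notation pe p v := (polyend p (fun z => th z) v).

Definition span (H : {poly K} -> Prop) (x : {poly K}) :=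
  exists s : seq ({poly K} * {poly K}),
    (forall uh, uh \in s -> H uh.2) /\ x = \sum_(uh <- s) uh.1 * uh.2.

Lemma span_pe H x v : span H x -> (forall h, H h -> pe h v = 0) -> pe x v = 0.
Proof.
move=> [s [Hs ->]] Hh; elim: s Hs => [|uh s IH] Hs; first by rewrite big_nil pe0.
rewrite big_cons pe_add pe_mul Hh ?pe_v0 ?add0r; last by apply: Hs; rewrite mem_head.
by apply: IH => uh' Hu; apply: Hs; rewrite in_cons Hu orbT.
Qed.

Lemma gen_pe H r v : span H r -> (forall h, H h -> r %| h) ->
  (forall h, H h -> pe h v = 0) <-> pe r v = 0.
Proof.
move=> Hs Hd; split; first exact: span_pe.
by move=> Hr h Hh; apply: pe_dvd (Hd _ Hh) Hr.
Qed.

Lemma pe_gcd a b v : pe (gcdp a b) v = 0 <-> pe a v = 0 /\ pe b v = 0.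
Proof.
split.
  by move=> H; split; apply: pe_dvd H; [exact: dvdp_gcdl | exact: dvdp_gcdr].
move=> [Ha Hb]; have [u /andP [Hu _]] := Bezoutp a b.
by apply: pe_dvd Hu _; rewrite pe_add !pe_mul Ha Hb !pe_v0 addr0.
Qed.

Definition sumpoly a b := if (a == 0) || (b == 0) then 0 else a * (b %/ gcdp a b).

Lemma pe_sum2 a b v : pe (sumpoly a b) v = 0 <->
  exists x y, pe a x = 0 /\ pe b y = 0 /\ v = x + y.
Proof.
rewrite /sumpoly; case: (eqVneq a 0) => [->|a0] /=.
  split=> [_|]; last by rewrite pe0.
  by exists v, 0; rewrite pe0 pe_v0 addr0.
case: (eqVneq b 0) => [->|b0] /=.
  split=> [_|]; last by rewrite pe0.
  by exists 0, v; rewrite pe0 pe_v0 add0r.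
set g := gcdp a b; set a' := a %/ g; set b' := b %/ g.
have Ea : g * a' = a by rewrite /a' divpKC // dvdp_gcdl.
have Eb : g * b' = b by rewrite /b' divpKC // dvdp_gcdr.
have Eh : b * a' = a * b' by rewrite -Ea -Eb mulrAC -!mulrA [a' * _]mulrC.
split.
  move=> Hv.
  have cop : coprimep a' b' by apply: coprimep_div_gcd; rewrite a0.
  have [[u1 u2] /= Hu] := Bezout_eq1_coprimepP _ _ cop.
  exists (pe (u2 * b') v), (pe (u1 * a') v); split; last split.
  - by rewrite pe_comm -pe_mul -mulrA [b' * a]mulrC pe_mul Hv pe_v0.
  - by rewrite -pe_mul mulrCA Eh pe_mul Hv pe_v0.
  - by rewrite -pe_add addrC Hu pe_1.
move=> [x [y [Hx [Hy ->]]]]; rewrite pe_vadd.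
rewrite (pe_dvd (dvdp_mulIl a b') Hx) (pe_dvd (_ : b %| a * b') Hy) ?addr0 //.
by rewrite -Eh dvdp_mulIl.
Qed.

Definition Dc g p := forall v, pe (g * p) v = 0 -> pe g v = 0.
Definition Nc p e := forall v, pe (p ^+ e.+1) v = 0 -> pe (p ^+ e) v = 0.

Lemma L2 g p x : Dc g p -> Dc (g * x) p.
Proof.
move=> H v Hv; rewrite pe_mul; apply: H; by rewrite -pe_mul mulrAC.
Qed.

Lemma D_pow g p k v : Dc g p -> pe (g * p ^+ k) v = 0 -> pe g v = 0.
Proof.
move=> H; elim: k v => [|k IH] v; first by rewrite expr0 mulr1.
by rewrite exprSr mulrA => Hv; apply: IH; exact: (L2 g p (p ^+ k) H v Hv).
Qed.


Lemma inc_irr g c : c != 0 -> (forall p, irreducible_poly p -> p %| c -> Dc g p) ->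
  forall v, pe (g * c) v = 0 -> pe g v = 0.
Proof.
elim/strong_size: c => c IH c0 Hc v.
case: (ltnP 1 (size c)) => Hs; last first.
  have /size_poly1P [k k0 Ek] : size c == 1%N.
    by rewrite eqn_leq Hs /= size_poly_gt0.
  rewrite Ek mulrC pe_mul pe_C => H.
  by rewrite -[pe g v](scale1r) -(mulVf k0) -scalerA H scaler0.
have [p [irr Hp]] := irr_factor Hs.
have E := divpK Hp.
have p0 := irredp_neq0 irr.
have c'0 : c %/ p != 0 by apply: contraNneq c0 => H; rewrite -E H mul0r.
have Hs' : (size (c %/ p)%R < size c)%N.
  rewrite size_divp // ltn_subrL size_poly_gt0 c0 andbT ltn_predRL.
  by case: irr.
rewrite -E mulrA => H.
apply: (IH _ Hs' c'0).
  by move=> q irq Hq; apply: Hc => //; apply: dvdp_trans Hq _; rewrite -{2}E dvdp_mulr.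
exact: (L2 g p (c %/ p) (Hc p irr Hp) v H).
Qed.

Lemma inc_char x g : x != 0 -> g != 0 -> g %| x ->
  (forall v, pe x v = 0 -> pe g v = 0) <->
  (forall p, irreducible_poly p -> p %| x %/ g -> Dc g p).
Proof.
move=> x0 g0 Hgx; have E := divpKC Hgx; split.
  move=> H p irr Hp v Hv; apply: H; apply: pe_dvd Hv.
  by rewrite -E dvdp_mul2l.
move=> H; rewrite -E; apply: inc_irr => //.
by apply: contraNneq x0 => H0; rewrite -E H0 mulr0.
Qed.

Lemma coprime_pow p q e : irreducible_poly p -> ~~ (p %| q) -> coprimep q (p ^+ e).
Proof. by move=> irr nd; rewrite coprimep_sym coprimep_expl // irr_coprime. Qed.

Lemma D_N p e g1 : irreducible_poly p -> ~~ (p %| g1) ->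
  Dc (p ^+ e * g1) p <-> Nc p e.
Proof.
move=> irr nd; split.
  move=> H v Hv.
  have Hg : pe (p ^+ e * g1) v = 0.
    by apply: H; rewrite mulrAC -exprSr mulrC pe_mul Hv pe_v0.
  have [[u1 u2] /= Hu] := Bezout_eq1_coprimepP _ _ (coprime_pow p g1 e.+1 irr nd).
  rewrite -[v](@pe_1 _ _ th v) -Hu pe_comm pe_add !pe_mul.
  rewrite -!pe_mul -!mulrA [g1 * _]mulrC [p ^+ e.+1 * _]mulrC (@pe_mul _ _ th u1) (@pe_mul _ _ th u2) Hg pe_mul Hv !pe_v0 addr0 //.
move=> H v Hv; rewrite pe_mul; apply: H.
by rewrite -pe_mul exprSr mulrAC.
Qed.

Lemma N_mono p e e' : Nc p e -> (e <= e')%N -> Nc p e'.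
Proof.
move=> H He v Hv.
have E : forall k, p ^+ (e' - e + k) = p ^+ k * p ^+ (e' - e)
  by move=> k; rewrite exprD mulrC.
have := H (pe (p ^+ (e' - e)) v).
by rewrite -!pe_mul -!E addnS subnK // => /(_ Hv).
Qed.

Lemma N_full p e vv q : irreducible_poly p -> ~~ (p %| q) ->
  (forall w, pe (p ^+ vv * q) w = 0) ->
  Nc p e <-> (forall w, pe (p ^+ (minn e vv) * q) w = 0).
Proof.
move=> irr nd Hd; split.
  move=> H w; case: (leqP vv e) => Hve.
    exact: Hd.
  have HD := (iffRL (D_N p e q irr nd)) H.
  apply: (D_pow (p ^+ e * q) p (vv - e)%N w HD).
  by rewrite mulrAC -exprD subnKC // ltnW.
move=> H v Hv; set m := minn e vv.
have [[u1 u2] /= Hu] := Bezout_eq1_coprimepP _ _ (coprime_pow p q e.+1 irr nd).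
have Em : p ^+ e = p ^+ (e - m) * p ^+ m by rewrite -exprD subnK // geq_minl.
rewrite -[v](@pe_1 _ _ th v) -Hu pe_comm pe_add !pe_mul.
rewrite -!pe_mul -!mulrA [q * _]mulrC [p ^+ e.+1 * _]mulrC (@pe_mul _ _ th u1) (@pe_mul _ _ th u2).
rewrite (@pe_mul _ _ th (p ^+ e) (p ^+ e.+1)) Hv !pe_v0 addr0 Em -mulrA pe_mul /m H !pe_v0.
by [].
Qed.

End Model.

Arguments span {K}.
Arguments sumpoly {K}.
Arguments span_pe {K V th H x v}.
Arguments pe_sum2 {K V th a b v}.

Section Exist.
Variable K : fieldType.
Implicit Types (p q g c a b : {poly K}).

Lemma span_H (H : {poly K} -> Prop) h : H h -> span H h.
Proof.
move=> Hh; exists [:: (1, h)]; split; last by rewrite big_seq1 mul1r.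
by move=> uh; rewrite mem_seq1 => /eqP ->.
Qed.

Lemma span_add (H : {poly K} -> Prop) x y : span H x -> span H y -> span H (x + y).
Proof.
move=> [s [Hs ->]] [t [Ht ->]]; exists (s ++ t); split; last by rewrite big_cat.
by move=> uh; rewrite mem_cat => /orP [/Hs|/Ht].
Qed.

Lemma span_mull (H : {poly K} -> Prop) k x : span H x -> span H (k * x).
Proof.
move=> [s [Hs ->]]; exists [seq (k * uh.1, uh.2) | uh <- s]; split.
  by move=> uh /mapP [uh' Hu ->] /=; exact: Hs.
by rewrite big_map mulr_sumr; apply: eq_bigr => uh _; rewrite mulrA.
Qed.

Lemma span_gen (H : {poly K} -> Prop) : (exists h, H h /\ h != 0) ->
  exists r, r \is monic /\ span H r /\ (forall h, H h -> r %| h).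
Proof.
move=> [h0 [Hh0 h00]].
have Hex : exists n, exists x, span H x /\ x != 0 /\ size x = n.
  by exists (size h0), h0; split; [apply: span_H|].
have [n [[x [Sx [x0 Ex]]] Hmin]] := cmin _ Hex.
have l0 : lead_coef x != 0 by rewrite lead_coef_eq0.
set r := (lead_coef x)^-1 *: x.
have Sr : span H r by rewrite /r -mul_polyC; apply: span_mull.
have r0 : r != 0 by rewrite /r scaler_eq0 negb_or invr_eq0 l0.
have szr : size r = n by rewrite /r size_scale ?invr_eq0.
exists r; split; first by rewrite monicE /r lead_coefZ mulVf.
split => // h Hh; apply/modp_eq0P; apply/eqP; apply/negPn/negP => Hm.
have Sm : span H (h %% r).
  have -> : h %% r = h + (- (h %/ r)) * r by rewrite mulNr {2}(divp_eq h r) addrAC subrr add0r.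
  by apply: span_add; [apply: span_H | apply: span_mull].
have := Hmin _ (ex_intro _ _ (conj Sm (conj Hm erefl))).
by rewrite -szr leqNgt ltn_modp r0.
Qed.

Lemma inter_char m (P : 'I_m -> {poly K}) : exists g,
  forall (V : lmodType K) (th : {linear V -> V}) (v : V),
    (forall l, polyend (P l) (fun z => th z) v = 0) <-> polyend g (fun z => th z) v = 0.
Proof.
case: (classic (exists h, (exists l, h = P l) /\ h != 0)) => [Hex|Hn].
  have [r [_ [Sr Hd]]] := span_gen _ Hex.
  exists r => V th v; split.
    by move=> Hl; apply: (span_pe Sr) => h [l ->].
  by move=> Hr l; apply: (pe_dvd _ Hr); apply: Hd; exists l.
exists 0 => V th v; split => [_|_ l]; first by rewrite pe0.
case: (eqVneq (P l) 0) => [->|nz]; first by rewrite pe0.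
by exfalso; apply: Hn; exists (P l); split => //; exists l.
Qed.

Lemma sum_char n (g : 'I_n -> {poly K}) : exists a,
  forall (V : lmodType K) (th : {linear V -> V}) (v : V),
    (exists w : 'I_n -> V, (forall k, polyend (g k) (fun z => th z) (w k) = 0) /\
        v = \sum_(k < n) w k) <-> polyend a (fun z => th z) v = 0.
Proof.
elim: n g => [|n IH] g.
  exists 1 => V th v; split.
    by move=> [w [_ ->]]; rewrite big_ord0 pe_v0.
  by rewrite pe_1 => ->; exists (fun _ => 0); split => [[]|]; rewrite ?big_ord0.
have [a' Ha'] := IH (fun i => g (lift ord0 i)).
exists (sumpoly (g ord0) a') => V th v; rewrite pe_sum2; split.
  move=> [w [Hw ->]]; exists (w ord0), (\sum_(i < n) w (lift ord0 i)).
  split; first exact: Hw.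
  split; last by rewrite big_ord_recl.
  by apply/Ha'; exists (fun i => w (lift ord0 i)).
move=> [x [y [Hx [/Ha' [w' [Hw' ->]] ->]]]].
exists (fun k => match unlift ord0 k with Some i => w' i | None => x end); split.
  by move=> k; case: unliftP => [j ->|->]; [exact: Hw' | exact: Hx].
rewrite big_ord_recl unlift_none; congr (_ + _); apply: eq_bigr => i _.
by rewrite liftK.
Qed.

Lemma sumcap_char n (m : 'I_n -> nat) (P : forall k : 'I_n, 'I_(m k) -> {poly K}) :
  exists a, forall (V : lmodType K) (th : {linear V -> V}) (v : V),
    sumcap (fun z => th z) P v <-> polyend a (fun z => th z) v = 0.
Proof.
have [g Hg] := fin_all_exists (fun k => @inter_char (m k) (P k)).
have [a Ha] := @sum_char n g.
exists a => V th v; rewrite -Ha /sumcap /Ker; split.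
  by move=> [w [Hw ->]]; exists w; split => // k; apply/Hg.
by move=> [w [Hw ->]]; exists w; split => // k; apply/Hg.
Qed.

End Exist.

Arguments Dc {K V} th g p.
Arguments Nc {K V} th p e.

Section Model2.
Variables (K : fieldType) (V : lmodType K) (th : {linear V -> V}).
Implicit Types (p q g c a b : {poly K}) (v u w : V).
Local Notation pe p v := (polyend p (fun z => th z) v).

Lemma inc_atoms x g : g %| x ->
  (forall v, pe x v = 0 -> pe g v = 0) <->
  ((x = 0 -> g != 0 -> forall v, pe g v = 0) /\
   (x != 0 -> g != 0 -> forall p, irreducible_poly p -> p %| x %/ g -> Dc th g p)).
Proof.
move=> Hgx; case: (eqVneq g 0) => [->|g0].
  split => [_|_ v _]; last by rewrite pe0.
  by split.
case: (eqVneq x 0) => [->|x0].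
  split; last by move=> [H _] v _; exact: H.
  move=> H; split => // _ _ v; apply: H; by rewrite pe0.
rewrite inc_char //; split.
  by move=> H; split => // E; rewrite E eqxx in x0.
by move=> [_ H]; exact: H.
Qed.

Lemma eq_atoms a b :
  (forall v, pe a v = 0 <-> pe b v = 0) <->
  ((forall v, pe a v = 0 -> pe (gcdp a b) v = 0) /\
   (forall v, pe b v = 0 -> pe (gcdp a b) v = 0)).
Proof.
split.
  move=> H; split => v Hv; apply/pe_gcd; split => //; [exact/H | exact/H].
move=> [Ha Hb] v; split => Hv.
  by have /pe_gcd [] := Ha v Hv.
by have /pe_gcd [] := Hb v Hv.
Qed.

Lemma Nc_eqp p f e : p %= f -> Nc th p e -> Nc th f e.
Proof.
move=> E H v Hv.
have E1 := eqp_exp e E; have E2 := eqp_exp e.+1 E.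
apply: (pe_dvd (q := f ^+ e) (p := p ^+ e)); first by case/andP: E1.
apply: H; apply: (pe_dvd (p := f ^+ e.+1)) Hv; by case/andP: E2.
Qed.

End Model2.

Lemma eqp_irred (K : fieldType) (p f : {poly K}) : p %= f -> irreducible_poly p -> irreducible_poly f.
Proof.
move=> E [Hs Hi]; split; first by rewrite -(eqp_size E).
move=> q Hq Hqf; have Hqp : q %| p by rewrite (eqp_dvdr _ E).
exact: eqp_trans (Hi q Hq Hqp) E.
Qed.

Theorem lemma2p8
  (K : fieldType)
  (Mod : Type) (V : Mod -> lmodType K)
  (V_nontriv : forall M : Mod, exists v : V M, v != 0)
  (V_infinite : forall M : Mod, ~ exists s : seq (V M), forall v : V M, v \in s)
  (J : Type) (nk : J -> nat) (nl : forall j : J, 'I_(nk j) -> nat)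
  (rho eta : forall (j : J) (k : 'I_(nk j)), 'I_(nl j k) -> {poly K}) :
  let Sat := fun (M : Mod) (th : {linear V M -> V M}) =>
    forall j : J, kereq (fun x => th x) (rho j) (eta j) in
  (exists (M : Mod) (th : {linear V M -> V M}), Sat M th) ->
  (exists r : {poly K},
     [/\ r \is monic, r != 1 &
       forall (M : Mod) (th : {linear V M -> V M}),
         Sat M th <-> (forall v : V M, Ker (fun x => th x) r v)])
  \/
  (exists (Q : {poly K} -> Prop) (nf : {poly K} -> nat),
     (forall f, Q f -> f \is monic /\ irreducible_poly f) /\
     forall (M : Mod) (th : {linear V M -> V M}),
       Sat M th <->
       (forall f, Q f -> forall v : V M,
          Ker (fun x => th x) (f ^+ nf f) v <-> Ker (fun x => th x) (f ^+ (nf f).+1) v)).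
Proof.
move=> Sat Hcons.
pose SC j a b :=
  (forall (W : lmodType K) (t : {linear W -> W}) (v : W),
     sumcap (fun z => t z) (rho j) v <-> polyend a (fun z => t z) v = 0) /\
  (forall (W : lmodType K) (t : {linear W -> W}) (v : W),
     sumcap (fun z => t z) (eta j) v <-> polyend b (fun z => t z) v = 0).
have SCex : forall j, exists a b, SC j a b.
  move=> j; have [a Ha] := @sumcap_char K _ _ (rho j).
  have [b Hb] := @sumcap_char K _ _ (eta j); by exists a, b.
pose C0 h := exists j a b, SC j a b /\ (a = 0 \/ b = 0) /\ gcdp a b != 0 /\ h = gcdp a b.
pose C1 g p := exists j a b, SC j a b /\ g = gcdp a b /\ g != 0 /\ irreducible_poly p /\
  ((a != 0 /\ p %| a %/ g) \/ (b != 0 /\ p %| b %/ g)).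
pose C2 p e := exists g g1, C1 g p /\ g = p ^+ e * g1 /\ ~~ (p %| g1).
have C2irr : forall p e, C2 p e -> irreducible_poly p.
  by move=> p e [g [g1 [[j [a [b [_ [_ [_ [irr _]]]]]]] _]]].
have Hkereq : forall M (th : {linear V M -> V M}) j a b, SC j a b ->
    (kereq (fun x => th x) (rho j) (eta j) <->
     forall v, polyend a (fun z => th z) v = 0 <-> polyend b (fun z => th z) v = 0).
  move=> M th j a b [Ha Hb]; rewrite /kereq; split => H v; split => Hv.
  - by apply/Hb; apply/(H v); apply/Ha.
  - by apply/Ha; apply/(H v); apply/Hb.
  - by apply/Hb; apply/(H v); apply/Ha.
  - by apply/Ha; apply/(H v); apply/Hb.
have HSat1 : forall M th, Sat M th <->
    (forall h, C0 h -> forall v, polyend h (fun z => th z) v = 0) /\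
    (forall g p, C1 g p -> Dc th g p).
  move=> M th; split.
    move=> HS; split.
      move=> h [j [a [b [Hsc [Hab [g0 ->]]]]]] v.
      have /(Hkereq _ _ _ _ _ Hsc) /eq_atoms [Ha Hb] := HS j.
      have [Ha1 _] := iffLR (@inc_atoms _ _ th _ _ (dvdp_gcdl a b)) Ha.
      have [Hb1 _] := iffLR (@inc_atoms _ _ th _ _ (dvdp_gcdr a b)) Hb.
      by case: Hab => E; [exact: Ha1 E g0 v | exact: Hb1 E g0 v].
    move=> g p [j [a [b [Hsc [-> [g0 [irr Hp]]]]]]].
    have /(Hkereq _ _ _ _ _ Hsc) /eq_atoms [Ha Hb] := HS j.
    have [_ Ha2] := iffLR (@inc_atoms _ _ th _ _ (dvdp_gcdl a b)) Ha.
    have [_ Hb2] := iffLR (@inc_atoms _ _ th _ _ (dvdp_gcdr a b)) Hb.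
    by case: Hp => [[a0 Hpa]|[b0 Hpb]]; [exact: Ha2 a0 g0 p irr Hpa | exact: Hb2 b0 g0 p irr Hpb].
  move=> [H0 H1] j; have [a [b Hsc]] := SCex j.
  apply/(Hkereq _ _ _ _ _ Hsc); apply/eq_atoms; split.
    apply/(@inc_atoms _ _ th _ _ (dvdp_gcdl a b)); split.
      move=> a0 g0 v; apply: H0; exists j, a, b; split => //; split; [by left | by split].
    move=> a0 g0 p irr Hp; apply: H1; exists j, a, b; do 4 (split => //); by left.
  apply/(@inc_atoms _ _ th _ _ (dvdp_gcdr a b)); split.
    move=> b0 g0 v; apply: H0; exists j, a, b; split => //; split; [by right | by split].
  move=> b0 g0 p irr Hp; apply: H1; exists j, a, b; do 4 (split => //); by right.
have HSat2 : forall M th, Sat M th <->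
    (forall h, C0 h -> forall v, polyend h (fun z => th z) v = 0) /\
    (forall p e, C2 p e -> Nc th p e).
  move=> M th; split.
    move=> /HSat1 [H0 H1]; split => // p e [g [g1 [Hc [Eg nd]]]].
    have irr : irreducible_poly p by case: Hc => [j [a [b [_ [_ [_ [irr _]]]]]]].
    apply/(@D_N _ _ th p e g1 irr nd); rewrite -Eg; exact: H1 _ _ Hc.
  move=> [H0 H2]; apply/HSat1; split => // g p Hc.
  have [irr g0] : irreducible_poly p /\ g != 0.
    by case: Hc => [j [a [b [_ [_ [gg [ii _]]]]]]]; split.
  have [e [g1 [Eg nd]]] := decomp g0 irr.
  rewrite Eg; apply/(@D_N _ _ th p e g1 irr nd); apply: H2; by exists g, g1; split => //; split.
case: (classic (exists h, C0 h)) => [[h0 Hh0]|Hn].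
  have h00 : h0 != 0.
    by case: Hh0 => [j [a [b [_ [_ [gg E]]]]]]; rewrite E.
  have [d [dm [Sd Dd]]] := @span_gen K C0 (ex_intro _ h0 (conj Hh0 h00)).
  have Fd : forall M (th : {linear V M -> V M}),
      (forall h, C0 h -> forall v, polyend h (fun z => th z) v = 0) ->
      forall v, polyend d (fun z => th z) v = 0.
    by move=> M th H v; apply: (span_pe Sd) => h Hh; exact: H h Hh v.
  pose C3 h := C0 h \/ exists p e vv q, C2 p e /\ d = p ^+ vv * q /\ ~~ (p %| q) /\
     h = p ^+ (minn e vv) * q.
  have [r [rm [Sr Dr]]] := @span_gen K C3 (ex_intro _ h0 (conj (or_introl Hh0) h00)).
  have Heq : forall M (th : {linear V M -> V M}),
      Sat M th <-> forall v, polyend r (fun z => th z) v = 0.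
    move=> M th; split.
      move=> /HSat2 [H0 H2] v; apply: (span_pe Sr).
      move=> h [Hh|[p [e [vv [q [Hc [Ed [nd ->]]]]]]]]; first exact: H0.
      have irr := C2irr _ _ Hc.
      have Hd : forall w, polyend (p ^+ vv * q) (fun z => th z) w = 0.
        by rewrite -Ed; exact: Fd H0.
      exact: (iffLR (@N_full _ _ th p e vv q irr nd Hd) (H2 p e Hc)) v.
    move=> Hr; apply/HSat2.
    have H3 : forall h, C3 h -> forall v, polyend h (fun z => th z) v = 0.
      by move=> h Hh v; apply: (pe_dvd (Dr h Hh) (Hr v)).
    have H0 : forall h, C0 h -> forall v, polyend h (fun z => th z) v = 0.
      by move=> h Hh; apply: H3; left.
    split => // p e Hc.
    have irr := C2irr _ _ Hc.
    have d0 := monic_neq0 dm.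
    have [vv [q [Ed nd]]] := decomp d0 irr.
    have Hd : forall w, polyend (p ^+ vv * q) (fun z => th z) w = 0.
      by rewrite -Ed; exact: Fd H0.
    apply/(@N_full _ _ th p e vv q irr nd Hd) => w; apply: H3; right.
    by exists p, e, vv, q.
  left; exists r; split; [done | | by move=> M th; exact: Heq].
    apply/negP => /eqP r1; have [M0 [th0 HS]] := Hcons.
    have [v v0] := V_nontriv M0.
    have := (iffLR (Heq M0 th0) HS) v; rewrite r1 pe_1 => E.
    by rewrite E eqxx in v0.
right.
pose P f n := exists p, C2 p n /\ p %= f.
pose nf f := epsilon (inhabits 0%N) (fun n => P f n /\ forall m, P f m -> (n <= m)%N).
have nfP : forall f, (exists n, P f n) -> P f (nf f) /\ forall m, P f m -> (nf f <= m)%N.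
  move=> f Hex; apply: (epsilon_spec (inhabits 0%N) (fun n => P f n /\ forall m, P f m -> (n <= m)%N)).
  exact: cmin _ Hex.
exists (fun f => f \is monic /\ exists n, P f n), nf; split.
  move=> f [fm [n [p [Hc E]]]]; split => //; apply: eqp_irred E _; exact: C2irr _ _ Hc.
move=> M th; split.
  move=> /HSat2 [_ H2] f [fm Hex] v; have [[p [Hc E]] _] := nfP f Hex; split.
    by apply: pe_dvd; rewrite exprS dvdp_mulIr.
  exact: (@Nc_eqp _ _ th p f (nf f) E (H2 _ _ Hc)) v.
move=> H; apply/HSat2; split; first by move=> h Hh; exfalso; apply: Hn; exists h.
move=> p e Hc; have irr := C2irr _ _ Hc; have p0 := irredp_neq0 irr.
have l0 : lead_coef p != 0 by rewrite lead_coef_eq0.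
set f := (lead_coef p)^-1 *: p.
have Epf : p %= f by rewrite eqp_sym eqp_scale // invr_eq0.
have fm : f \is monic by rewrite monicE lead_coefZ mulVf.
have Hex : exists n, P f n by exists e, p.
have [_ Hmin] := nfP f Hex.
have Nf : Nc th f (nf f) by move=> v Hv; apply: (iffRL (H f (conj fm Hex) v)).
have := @N_mono _ _ th f (nf f) e Nf (Hmin e (ex_intro _ p (conj Hc Epf))).
by apply: Nc_eqp; rewrite eqp_sym.
Qed.
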